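(* Under the standing assumptions, suppose in addition that $J$ is absolutely $p$-homogeneous. If $u$ is a $p$-eigenvector of $J$ with subgradient $\zeta$ and eigenvalue $\lambda$, then $|\zeta|_{H^*}\le|\tilde\zeta|_{H^*}$ for every $\tilde\zeta\in\partial J(u)$.
   Context: Standing assumptions: $X$ is a real reflexive Banach space with dual $X^*$ and duality pairing $\langle\cdot,\cdot\rangle$; $\Gamma_0(X)$ is the class of proper, lower semi-continuous, convex functionals $X\to\mathbb{R}\cup\{+\infty\}$. Fix $1<p<\infty$. Let $J\in\Gamma_0(X)$, and let $H\in\Gamma_0(X)$ be absolutely $p$-homogeneous ($H(tu)=|t|^pH(u)$) such that $|u|_H:=(pH(u))^{1/p}$ is a norm on $X$, so $H(u)=\frac1p|u|_H^p$. The dual norm is $|\zeta|_{H^*}=\sup_{u\ne0}\langle\zeta,u\rangle/|u|_H$. The subdifferential is $\partial J(u)=\{\zeta\in X^*:\ J(u)+\langle\zeta,v-u\rangle\le J(v)\ \forall v\in X\}$. Growth assumption: there is $c>0$ with $H(u)\le cJ(u)$ for all $u\in X$. The Rayleigh quotient is $R(u)=J(u)/H(u)$ for $u\ne0$. A $p$-eigenvector of $J$: $u\in X\setminus\{0\}$ with subgradient $\zeta\in\partial J(u)$ and eigenvalue $\lambda=R(u)\in\mathbb{R}$ such that $\zeta\in\lambda\,\partial H(u)$. *)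

(* Defs.v *)
From HB Require Import structures.
From mathcomp Require Import all_boot all_order all_algebra.
From mathcomp Require Import all_classical all_reals all_analysis.
Set Implicit Arguments. Unset Strict Implicit. Unset Printing Implicit Defensive.
Import Order.TTheory GRing.Theory Num.Theory.
Import numFieldNormedType.Exports.
Local Open Scope classical_set_scope.
Local Open Scope ring_scope.

(* X is a real Banach space (completeNormedModType R,
   R : realType); its (topological) dual X^* is represented by the functions
   zeta : X -> R that are linear and continuous; the duality pairing
   <zeta, u> is application zeta u. *)

Section Defs.
Context {R : realType} {X : completeNormedModType R}.

Definition is_dual (zeta : X -> R) : Prop :=
  (forall (a : R) (x y : X), zeta (a *: x + y) = a * zeta x + zeta y)
  /\ continuous zeta.

(* Reflexivity: every bounded linear functional on X^* (bounded w.r.t. the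
   dual operator norm, expressed without a sup) is evaluation at a point of X. *)
Definition reflexive_space : Prop :=
  forall Phi : (X -> R) -> R,
    (forall (a : R) (z1 z2 : X -> R), is_dual z1 -> is_dual z2 ->
        Phi (fun x => a * z1 x + z2 x) = a * Phi z1 + Phi z2) ->
    (exists C : R, forall z : X -> R, is_dual z -> forall M : R,
        (forall x, `|z x| <= M * `|x|) -> `|Phi z| <= C * M) ->
    exists x0 : X, forall z, is_dual z -> Phi z = z x0.

Local Open Scope ereal_scope.

Definition proper_fun (F : X -> \bar R) : Prop :=
  (forall x, F x != -oo) /\ (exists x, F x < +oo).

Definition convex_fun (F : X -> \bar R) : Prop :=
  forall (t : R) (x y : X), (0 < t < 1)%R ->
    F (t *: x + (1 - t) *: y)%R <= t%:E * F x + (1 - t)%:E * F y.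

Definition Gamma0 (F : X -> \bar R) : Prop :=
  proper_fun F /\ lower_semicontinuous F /\ convex_fun F.

Definition abs_p_homogeneous (p : R) (F : X -> \bar R) : Prop :=
  forall (t : R) (u : X), F (t *: u) = (`|t| `^ p)%:E * F u.

Definition Hnorm (p : R) (H : X -> \bar R) (u : X) : R :=
  (p * fine (H u)) `^ (p^-1).

Definition Hnorm_is_norm (p : R) (H : X -> \bar R) : Prop :=
  (forall u, H u \is a fin_num) /\
  (forall u, (0 <= Hnorm p H u)%R) /\
  (forall u, Hnorm p H u = 0%R -> u = 0%R) /\
  (forall (t : R) u, Hnorm p H (t *: u) = (`|t| * Hnorm p H u)%R) /\
  (forall u v, (Hnorm p H (u + v)%R <= Hnorm p H u + Hnorm p H v)%R).

Definition Hdualnorm (p : R) (H : X -> \bar R) (zeta : X -> R) : \bar R :=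
  ereal_sup [set (zeta u / Hnorm p H u)%:E | u in [set u : X | u != 0%R]].

Definition subdiff (F : X -> \bar R) (u : X) : set (X -> R) :=
  [set zeta | is_dual zeta /\ forall v, F u + (zeta (v - u)%R)%:E <= F v].

Definition rayleigh (J H : X -> \bar R) (u : X) : \bar R := J u * (H u)^-1.

Definition p_eigenvector (J H : X -> \bar R) (u : X) (zeta : X -> R)
    (lambda : R) : Prop :=
  u != 0%R /\ zeta \in subdiff J u /\ lambda%:E = rayleigh J H u /\
  exists2 eta, eta \in subdiff H u & zeta = (fun x => (lambda * eta x)%R).

End Defs.

(* Main.v *)
Require Import Defs.
From HB Require Import structures.
From mathcomp Require Import all_boot all_order all_algebra.
From mathcomp Require Import all_classical all_reals all_analysis.
From mathcomp Require Import lra ring.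
Import Order.TTheory GRing.Theory Num.Theory.
Import numFieldNormedType.Exports.
Local Open Scope classical_set_scope.
Local Open Scope ring_scope.

Lemma euler_aux (R : realType) (p a j : R) : 1 < p ->
  (forall s : R, 0 < s -> j + (s - 1) * a <= s `^ p * j) -> a = p * j.
Proof.
move=> p1 H.
pose f := (a \*: (@id R)) - (j \*: (fun s : R => s `^ p)).
have D : is_derive (1:R) 1 f (a *: 1 - j *: (p * 1 `^ (p - 1))).
  apply: is_deriveB; apply: is_deriveZ => //.
  by apply: is_derive1_powR; exact: ltr01.
have M : is_derive (1:R) 1 f 0.
  apply: (@derive1_at_max R f 0 2).
  - by rewrite ler0n.
  - move=> t; rewrite in_itv /= => /andP[t0 _].
    apply: derivableB => //; apply: derivableZ => //.
    by apply: derivable_powR; rewrite in_itv /= t0.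
  - by rewrite in_itv /= ltr01 ltr1n.
  - move=> t; rewrite in_itv /= => /andP[t0 _].
    have -> : f t = a * t - j * t `^ p by [].
    have -> : f 1 = a * 1 - j * 1 `^ p by [].
    have := H t t0; rewrite powR1 mulr1; nra.
have E1 := @derive_val _ _ _ _ _ _ _ D.
have E2 := @derive_val _ _ _ _ _ _ _ M.
rewrite E2 powR1 mulr1 in E1. move/eqP: E1.
rewrite eq_sym subr_eq0 => /eqP.
by rewrite /GRing.scale /= mulr1 mulrC.
Qed.


Section Aux.
Context {R : realType} {X : completeNormedModType R}.

Lemma dual0 (z : X -> R) : is_dual z -> z 0 = 0.
Proof.
move=> [L _]; have := L 1 0 0; rewrite scale1r addr0 mul1r => /eqP.
by rewrite -subr_eq0 opprD addrA subrr sub0r oppr_eq0 => /eqP.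
Qed.

Lemma dualZ (z : X -> R) a x : is_dual z -> z (a *: x) = a * z x.
Proof. by move=> hz; have := proj1 hz a x 0; rewrite (@dual0 z hz) !addr0. Qed.

Lemma dualB (z : X -> R) x y : is_dual z -> z (x - y) = z x - z y.
Proof.
move=> hz; have := proj1 hz 1 x (- y); rewrite scale1r mul1r => ->.
by rewrite -scaleN1r dualZ // mulN1r.
Qed.

Local Open Scope ereal_scope.

Lemma F_nonneg (p : R) (F : X -> \bar R) u : (0 < p)%R ->
  abs_p_homogeneous p F -> convex_fun F -> F u != -oo -> 0 <= F u.
Proof.
move=> p0 hom cvx nu.
have F0 : F 0%R = 0.
  by have := hom 0%R u; rewrite scale0r normr0 powR0 ?gt_eqF // mul0e.
have Fm : F (- u)%R = F u.
  by have := hom (-1)%R u; rewrite scaleN1r normrN normr1 powR1 mul1e.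
have h12 : ((0:R) < 1/2 < (1:R))%R by apply/andP; split; lra.
have := cvx (1/2)%R u (- u)%R h12.
have -> : ((1/2) *: u + (1 - 1/2) *: - u = 0 :> X)%R.
  have -> : (1 - 1/2 = 1/2 :> R)%R by lra.
  by rewrite scalerN subrr.
rewrite Fm F0; move: nu; case: (F u) => // r _ H; rewrite lee_fin.
have: (0 <= (1/2) * r + (1 - 1/2) * r)%R by rewrite -lee_fin EFinD !EFinM.
lra.
Qed.


Lemma euler_sub (p : R) (F : X -> \bar R) u (z : X -> R) (j : R) : (1 < p)%R ->
  abs_p_homogeneous p F -> F u = j%:E -> is_dual z ->
  (forall v, F u + (z (v - u)%R)%:E <= F v) -> z u = (p * j)%R.
Proof.
move=> p1 hom Fu hz hs; apply: euler_aux => // s s0.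
have := hs (s *: u)%R; rewrite hom Fu (dualB _ _ _ hz) (dualZ _ _ _ hz).
rewrite -EFinD -EFinM lee_fin gtr0_norm //.
by rewrite mulrBl mul1r.
Qed.

Lemma Hnorm_pow (p : R) (H : X -> \bar R) v : (0 < p)%R ->
  (0 <= fine (H v))%R -> (Hnorm p H v `^ p = p * fine (H v))%R.
Proof.
move=> p0 hv; rewrite /Hnorm -powRrM mulVf ?gt_eqF // powRr1 //.
exact: mulr_ge0 (ltW p0) hv.
Qed.

End Aux.

Local Open Scope classical_set_scope.
Local Open Scope ring_scope.

Theorem mainTheorem5 (R : realType) (X : completeNormedModType R)
  (p : R) (J H : X -> \bar R) (c : R) (u : X) (zeta : X -> R) (lambda : R) :
  reflexive_space (X := X) ->
  1 < p ->
  Gamma0 J -> Gamma0 H ->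
  abs_p_homogeneous p H -> Hnorm_is_norm p H ->
  0 < c -> (forall v, (H v <= c%:E * J v)%E) ->
  abs_p_homogeneous p J ->
  p_eigenvector J H u zeta lambda ->
  forall zeta', zeta' \in subdiff J u ->
    (Hdualnorm p H zeta <= Hdualnorm p H zeta')%E.
Proof.
move=> _ p1 [[Jm [x0 Jx0]] [_ Jcvx]] [_ [_ Hcvx]] Hhom [Hfin [Hn0 [Hdef [HZ _]]]]
  c0 grow Jhom [u0 [/set_mem [zd zsub] [_ [eta /set_mem [ed esub] ze]]]] zeta'
  /set_mem [zd' zsub'].
have p0 : 0 < p by exact: lt_trans ltr01 p1.
have Hge0 v : (0 <= fine (H v))%R.
  have := F_nonneg p H v p0 Hhom Hcvx.
  rewrite -(fineK (Hfin v)) lee_fin; apply; by [].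
set h := fine (H u).
have Hu : H u = h%:E by rewrite /h fineK.
have nu0 : 0 < Hnorm p H u.
  rewrite lt0r Hn0 andbT; apply/eqP => /Hdef /eqP; exact/negP.
have h0 : 0 < h.
  rewrite lt0r Hge0 andbT; apply/eqP => h0; move: nu0.
  by rewrite /Hnorm -/h h0 mulr0 powR0 ?lt_irreflexive // invr_eq0 gt_eqF.
have Jfin : J u \is a fin_num.
  rewrite fin_numE Jm andTb; apply/eqP => Jinf.
  have := zsub' x0; rewrite Jinf addye //; move: Jx0; case: (J x0) => //.
set j := fine (J u).
have Ju : J u = j%:E by rewrite /j fineK.
have j0 : 0 <= j.
  have := grow u; rewrite Hu Ju -EFinM lee_fin => hc.
  have : 0 < c * j by exact: lt_le_trans h0 hc.
  by rewrite pmulr_rgt0 // => /ltW.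
have Ez : zeta u = p * j := euler_sub p J u zeta j p1 Jhom Ju zd zsub.
have Ez' : zeta' u = p * j := euler_sub p J u zeta' j p1 Jhom Ju zd' zsub'.
have Ee : eta u = p * h := euler_sub p H u eta h p1 Hhom Hu ed esub.
have l0 : 0 <= lambda.
  have : lambda * (p * h) = p * j by rewrite -Ee -Ez ze.
  have ph : 0 < p * h by rewrite mulr_gt0.
  move=> E; rewrite leNgt; apply/negP => ln0.
  have : lambda * (p * h) < 0 by rewrite pmulr_llt0.
  rewrite E; apply/negP; rewrite -leNgt; exact: mulr_ge0 (ltW p0) j0.
set nu := Hnorm p H u.
have key v : v != 0 -> eta v / Hnorm p H v <= eta u / nu.
  move=> v0.
  have nv0 : 0 < Hnorm p H v.
    rewrite lt0r Hn0 andbT; apply/eqP => /Hdef /eqP; exact/negP.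
  set nv := Hnorm p H v.
  set w := (nu / nv) *: v.
  have nw : Hnorm p H w = nu.
    by rewrite HZ gtr0_norm ?divr_gt0 // -/nv mulfVK ?gt_eqF.
  have Hw : H w = H u.
    rewrite -(fineK (Hfin w)) -(fineK (Hfin u)); congr (_%:E).
    have := Hnorm_pow p H w p0 (Hge0 w); rewrite nw Hnorm_pow //.
    move=> E; apply: (@mulfI _ p); [by rewrite gt_eqF | by rewrite E].
  have := esub w; rewrite Hw Hu (dualB _ _ _ ed) -EFinD lee_fin.
  rewrite -[X in _ <= X]addr0 lerD2l subr_le0 /w (dualZ _ _ _ ed).
  move=> hh; rewrite ler_pdivlMr //; apply: le_trans hh; rewrite le_eqVlt; apply/orP; left; apply/eqP; ring.
apply: le_trans (_ : ((zeta' u / nu)%:E <= _)%E).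
  apply: ge_ereal_sup => _ [v /= v0 <-]; rewrite lee_fin Ez' -Ez ze.
  by rewrite -!mulrA ler_wpM2l // key.
apply: ereal_sup_ubound; exists u => //.
Qed.
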